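(* For every $n\ge 2$, $C(2w_n)=C(2v_{n+1})$, where $w_n=x_1\cdots x_n(x_1^2+1)$ and $v_{n+1}=x_1\cdots x_{n+1}(x_1+x_2)$.
   Context: All operations are on $\mathbb{Z}_8$. For an operation $f$, $C(f)$ denotes the clone generated by $f$ together with binary addition and all unary constant operations. *)

(* Defs.v *)
From mathcomp Require Import all_boot all_algebra.
Set Implicit Arguments. Unset Strict Implicit. Unset Printing Implicit Defensive.
Import GRing.Theory.
Local Open Scope ring_scope.

Definition Z8 := 'Z_8.

Definition op (k : nat) := ('I_k -> Z8) -> Z8.

Definition is_clone (C : forall k, op k -> Prop) : Prop :=
  (forall k (i : 'I_k), C k (fun x => x i)) /\
  (forall k m (h : op m) (gs : 'I_m -> op k),
      C m h -> (forall j, C k (gs j)) -> C k (fun x => h (fun j => gs j x))).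

Definition clone_gen (F : forall k, op k -> Prop) (k : nat) (g : op k) : Prop :=
  forall C, is_clone C -> (forall m h, F m h -> C m h) -> C k g.

(** Generators of C(f): f itself, binary addition and all unary constants. *)
Inductive gens (n : nat) (f : op n) : forall m, op m -> Prop :=
| gens_f : gens f f
| gens_add : gens f (fun x : 'I_2 -> Z8 => x ord0 + x ord_max)
| gens_const (c : Z8) : gens f (fun _ : 'I_1 -> Z8 => c).

Definition C_of (n : nat) (f : op n) (k : nat) (g : op k) : Prop :=
  clone_gen (@gens n f) g.

(** The j-th variable (0-based: x_{j+1} in the paper) of a tuple, 0 if absent. *)
Definition var (n : nat) (x : 'I_n -> Z8) (j : nat) : Z8 :=
  nth 0 [seq x i | i <- enum 'I_n] j.

Definition w_op (n : nat) : op n :=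
  fun x => (\prod_(i < n) x i) * (var x 0 ^+ 2 + 1).

Definition v_op (m : nat) : op m :=
  fun x => (\prod_(i < m) x i) * (var x 0 + var x 1).

Definition twice (n : nat) (f : op n) : op n := fun x => 2%:R * f x.

Arguments w_op n : clear implicits.
Arguments v_op m : clear implicits.
Arguments C_of n f k g : clear implicits.

(* Main.v *)
Require Import Defs.
From mathcomp Require Import all_boot all_algebra.
From mathcomp Require Import ring zify.
From Stdlib Require Import FunctionalExtensionality.
Set Implicit Arguments. Unset Strict Implicit. Unset Printing Implicit Defensive.
Import GRing.Theory.

Local Open Scope ring_scope.

Definition eA (X Y : 'Z_8) :=
  2%:R*(X*Y*(X+Y)) == 2%:R*(X*(X^+2+1)) + 2%:R*(Y*(Y^+2+1)) + 2%:R*((X+Y)*((X+Y)^+2+1)).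
Lemma keyA0 : all (fun i => all (fun j => eA (inZp i) (inZp j)) (iota 0 8)) (iota 0 8).
Proof. by vm_compute. Qed.
Lemma keyA (X Y : 'Z_8) :
  2%:R*(X*Y*(X+Y)) = 2%:R*(X*(X^+2+1)) + 2%:R*(Y*(Y^+2+1)) + 2%:R*((X+Y)*((X+Y)^+2+1)).
Proof. apply/eqP. have /allP H := keyA0.
have hX : nat_of_ord X \in iota 0 8 by rewrite mem_iota /=; exact: ltn_ord.
have hY : nat_of_ord Y \in iota 0 8 by rewrite mem_iota /=; exact: ltn_ord.
have /allP := H X hX. move/(_ Y hY). by rewrite /eA !valZpK. Qed.

Definition eB (X Y : 'Z_8) :=
  2%:R*(X*(X^+2+1)*Y) == 2%:R*(1*Y*X*(1+Y)) + 2%:R*(1*X*Y*(1+X)) + 2%:R*(Y*X*X*(Y+X)).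
Lemma keyB0 : all (fun i => all (fun j => eB (inZp i) (inZp j)) (iota 0 8)) (iota 0 8).
Proof. by vm_compute. Qed.
Lemma keyB (X Y : 'Z_8) :
  2%:R*(X*(X^+2+1)*Y) = 2%:R*(1*Y*X*(1+Y)) + 2%:R*(1*X*Y*(1+X)) + 2%:R*(Y*X*X*(Y+X)).
Proof. apply/eqP. have /allP H := keyB0.
have hX : nat_of_ord X \in iota 0 8 by rewrite mem_iota /=; exact: ltn_ord.
have hY : nat_of_ord Y \in iota 0 8 by rewrite mem_iota /=; exact: ltn_ord.
have /allP := H X hX. move/(_ Y hY). by rewrite /eB !valZpK. Qed.

Section Cl.
Variable C : forall k, op k -> Prop.
Hypothesis hC : is_clone C.

Lemma cl_proj k (i : 'I_k) : C (fun x => x i).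
Proof. exact: hC.1. Qed.

Lemma cl_comp k m (h : op m) (gs : 'I_m -> op k) :
  C h -> (forall j, C (gs j)) -> C (fun x => h (fun j => gs j x)).
Proof. exact: hC.2. Qed.

Lemma cl_ext k (f g : op k) : C f -> (forall x, f x = g x) -> C g.
Proof. by move=> Hf E; have <- : f = g by apply: functional_extensionality. Qed.

Hypothesis hadd : C (fun x : 'I_2 -> Z8 => x ord0 + x ord_max).
Hypothesis hconst : forall c : Z8, C (fun _ : 'I_1 -> Z8 => c).

Lemma cl_add k (f g : op k) : C f -> C g -> C (fun x => f x + g x).
Proof.
move=> Hf Hg.
pose gs (j : 'I_2) := if j == ord0 then f else g.
have H : C (fun x => (fun y : 'I_2 -> Z8 => y ord0 + y ord_max) (fun j => gs j x)).
  by apply: (cl_comp (gs:=gs) hadd) => j; rewrite /gs; case: (j == ord0).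
by apply: cl_ext H _ => x.
Qed.

Lemma cl_cst k (i : 'I_k) (c : Z8) : C (fun _ : 'I_k -> Z8 => c).
Proof. exact: (cl_comp (gs := fun _ => fun x => x i) (hconst c)) (fun _ => cl_proj i). Qed.

End Cl.

Lemma transfer n1 (f1 : op n1) n2 (f2 : op n2) :
  C_of n1 f1 n2 f2 -> forall k g, C_of n2 f2 k g -> C_of n1 f1 k g.
Proof.
move=> H k g Hg C hC hF; apply: Hg => // m h; case.
- exact: H.
- exact: hF _ _ (gens_add _).
- by move=> c; exact: hF _ _ (gens_const _ c).
Qed.

Lemma var_ord n (x : 'I_n.+1 -> Z8) (i : 'I_n.+1) : var x i = x i.
Proof. by rewrite /var (nth_map ord0) ?size_enum_ord // nth_ord_enum. Qed.

Lemma w_in_v m : C_of m.+3 (twice (v_op m.+3)) m.+2 (twice (w_op m.+2)).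
Proof.
move=> C hC hF.
have hf := hF _ _ (gens_f (twice (v_op m.+3))).
have hadd := hF _ _ (gens_add (twice (v_op m.+3))).
have hconst c := hF _ _ (gens_const (twice (v_op m.+3)) c).
pose gsB (a b c : op m.+2) (j : 'I_m.+3) : op m.+2 :=
  match nat_of_ord j with 0 => a | 1 => b | 2 => c | k.+3 => fun x => x (inord k.+2) end.
have Hterm : forall a b c, C _ a -> C _ b -> C _ c ->
    C _ (fun x => twice (v_op m.+3) (fun j => gsB a b c j x)).
  move=> a b c Ha Hb Hc; apply: (cl_comp hC (gs := gsB a b c) hf) => j.
  by rewrite /gsB; case: (nat_of_ord j) => [|[|[|k]]] //; exact: cl_proj.
pose P (x : 'I_m.+2 -> Z8) := \prod_(j < m) x (lift ord0 (lift ord0 j)).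
have Ev : forall a b c x, twice (v_op m.+3) (fun j => gsB a b c j x) =
    2%:R * (a x * (b x * (c x * P x)) * (a x + b x)).
  move=> a b c x; rewrite /twice /v_op !big_ord_recl.
  have v0 : forall y : 'I_m.+3 -> Z8, var y 0 = y ord0 := fun y => var_ord y ord0.
  have v1 : forall y : 'I_m.+3 -> Z8, var y 1 = y (lift ord0 ord0) := fun y => var_ord y (lift ord0 ord0).
  rewrite v0 v1 /gsB /=.
  rewrite /P; congr (2 * (_ * (_ * (_ * _)) * _)); apply: eq_bigr => i _.
  congr (x _); apply/val_inj; rewrite /= inordK ?lift0 //.
  by rewrite add0n !ltnS ltn_ord.
have hX := cl_proj hC (ord0 : 'I_m.+2).
have hY := cl_proj hC (lift ord0 (ord0 : 'I_m.+1)).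
have h1 := cl_cst hC hconst (ord0 : 'I_m.+2) 1.
have H := cl_add hC hadd (cl_add hC hadd (Hterm _ _ _ h1 hY hX) (Hterm _ _ _ h1 hX hY))
   (Hterm _ _ _ hY hX hX).
apply: cl_ext H _ => x; symmetry; rewrite !Ev /twice /w_op !big_ord_recl.
rewrite (var_ord x ord0) /P.
set X := x ord0; set Y := x (lift ord0 ord0); set Q := \prod_(i < m) _.
transitivity (2%:R*(X*(X^+2+1)*Y) * Q); first by ring.
rewrite keyB; ring.
Qed.

Lemma v_in_w m : C_of m.+2 (twice (w_op m.+2)) m.+3 (twice (v_op m.+3)).
Proof.
move=> C hC hF.
have hf := hF _ _ (gens_f (twice (w_op m.+2))).
have hadd := hF _ _ (gens_add (twice (w_op m.+2))).
pose gsA (a : op m.+3) (j : 'I_m.+2) : op m.+3 :=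
  match nat_of_ord j with 0 => a | k.+1 => fun x => x (inord k.+2) end.
have Hterm : forall a, C _ a -> C _ (fun x => twice (w_op m.+2) (fun j => gsA a j x)).
  move=> a Ha; apply: (cl_comp hC (gs := gsA a) hf) => j.
  by rewrite /gsA; case: (nat_of_ord j) => [|k] //; exact: cl_proj.
pose P (x : 'I_m.+3 -> Z8) := x (lift ord0 (lift ord0 ord0)) *
   \prod_(j < m) x (lift ord0 (lift ord0 (lift ord0 j))).
have Ev : forall a x, twice (w_op m.+2) (fun j => gsA a j x) =
    2%:R * (a x * P x * (a x ^+ 2 + 1)).
  move=> a x; rewrite /twice /w_op !big_ord_recl.
  have v0 : forall y : 'I_m.+2 -> Z8, var y 0 = y ord0 := fun y => var_ord y ord0.
  rewrite v0 /gsA /=.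
  rewrite /P; congr (2 * (_ * (_ * _) * _)).
    congr (x _); apply/val_inj; by rewrite /= inordK.
  apply: eq_bigr => i _.
  congr (x _); apply/val_inj; rewrite /= inordK ?lift0 //.
  by rewrite add0n !ltnS ltn_ord.
have hX := cl_proj hC (ord0 : 'I_m.+3).
have hY := cl_proj hC (lift ord0 (ord0 : 'I_m.+2)).
have H := cl_add hC hadd (cl_add hC hadd (Hterm _ hX) (Hterm _ hY))
   (Hterm _ (cl_add hC hadd hX hY)).
apply: cl_ext H _ => x; symmetry; rewrite !Ev /twice /v_op !big_ord_recl.
have v1 : forall y : 'I_m.+3 -> Z8, var y 1 = y (lift ord0 ord0) := fun y => var_ord y (lift ord0 ord0).
rewrite (var_ord x ord0) v1 /P.
set X := x ord0; set Y := x (lift ord0 ord0); set Q := \prod_(i < m) _.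
set Z := x (lift ord0 (lift ord0 ord0)).
transitivity (2%:R*(X*Y*(X+Y)) * (Z * Q)); first by ring.
rewrite keyA; ring.
Qed.

Local Close Scope ring_scope.

Theorem lemma4p5 (n : nat) (hn : 2 <= n) :
  forall (k : nat) (g : op k),
    C_of n (twice (w_op n)) k g <-> C_of n.+1 (twice (v_op n.+1)) k g.
Proof.
case: n hn => [|[|m]] // _ k g; split.
- exact: transfer (@w_in_v m) k g.
- exact: transfer (@v_in_w m) k g.
Qed.
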